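(* Let $\mathcal{K}\subset\mathbb{R}^n$ be a compact convex set and let $\phi:\mathcal{K}\to\mathbb{R}$ be a continuous convex function. Then for every $\varepsilon>0$ there exist a rational number $T>0$ and a function $f_T\in\mathrm{LSE}_T$ with rational parameters such that $$|f_T(\mathbf{x})-\phi(\mathbf{x})|\leqslant\varepsilon\quad\text{for all }\mathbf{x}\in\mathcal{K}.$$ Moreover, $T$ may be chosen of the form $T=1/p$ where $p$ is a positive integer.
   Context: For $T>0$, $\mathrm{LSE}_T$ denotes the class of functions $f_T:\mathbb{R}^n\to\mathbb{R}$ of the form $$f_T(\mathbf{x})=T\log\Big(\sum_{k=1}^K \exp\big(\langle\boldsymbol{\alpha}^{(k)},\mathbf{x}\rangle/T+\beta_k/T\big)\Big)$$ for some positive integer $K$, vectors $\boldsymbol{\alpha}^{(1)},\dots,\boldsymbol{\alpha}^{(K)}\in\mathbb{R}^n$ and real numbers $\beta_1,\dots,\beta_K$. A function $f_T\in\mathrm{LSE}_T$ has rational parameters if $T$ is rational and $f_T$ can be written in this form with all entries of the vectors $\boldsymbol{\alpha}^{(k)}$ and all $\beta_k$ rational. *)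

(* Defs.v *)
From HB Require Import structures.
From mathcomp Require Import all_boot all_order all_algebra.
From mathcomp Require Import all_classical all_reals all_analysis.
Set Implicit Arguments. Unset Strict Implicit. Unset Printing Implicit Defensive.
Import Order.TTheory GRing.Theory Num.Theory.
Import numFieldNormedType.Exports.
Local Open Scope ring_scope.
Local Open Scope classical_set_scope.

Definition dotv (R : realType) (n : nat) (a x : 'rV[R]_n) : R :=
  \sum_(i < n) a ord0 i * x ord0 i.

Definition convex_set_Rn (R : realType) (n : nat) (C : set 'rV[R]_n) : Prop :=
  forall x y, C x -> C y -> forall t : R, 0 <= t <= 1 ->
    C (t *: x + (1 - t) *: y).

Definition convex_on (R : realType) (n : nat) (C : set 'rV[R]_n)
  (phi : 'rV[R]_n -> R) : Prop :=
  forall x y, C x -> C y -> forall t : R, 0 <= t <= 1 ->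
    phi (t *: x + (1 - t) *: y) <= t * phi x + (1 - t) * phi y.

Definition LSE (R : realType) (n K : nat) (T : R)
  (alpha : 'I_K -> 'rV[R]_n) (beta : 'I_K -> R) (x : 'rV[R]_n) : R :=
  T * ln (\sum_(k < K) expR (dotv (alpha k) x / T + beta k / T)).

Definition LSE_rat (R : realType) (n K : nat) (T : rat)
  (alpha : 'I_K -> 'rV[rat]_n) (beta : 'I_K -> rat) : 'rV[R]_n -> R :=
  LSE (ratr T) (fun k => map_mx ratr (alpha k)) (fun k => ratr (beta k)).

(* Main.v *)
Require Import Defs.
From HB Require Import structures.
From mathcomp Require Import all_boot all_order all_algebra.
From mathcomp Require Import all_classical all_reals all_analysis.
From mathcomp Require Import ring lra.
From mathcomp Require finmap.
Import Order.TTheory GRing.Theory Num.Theory.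
Import numFieldNormedType.Exports.
Local Open Scope ring_scope.
Local Open Scope classical_set_scope.

Lemma dotvDr (R : realType) n (a x y : 'rV[R]_n) : dotv a (x + y) = dotv a x + dotv a y.
Proof. by rewrite /dotv -big_split; apply: eq_bigr => i _; rewrite mxE mulrDr. Qed.

Lemma dotvZr (R : realType) n (a x : 'rV[R]_n) k : dotv a (k *: x) = k * dotv a x.
Proof. by rewrite /dotv mulr_sumr; apply: eq_bigr => i _; rewrite mxE mulrCA. Qed.

Lemma dotvNr (R : realType) n (a x : 'rV[R]_n) : dotv a (- x) = - dotv a x.
Proof. by rewrite -scaleN1r dotvZr mulN1r. Qed.

Lemma dotvBr (R : realType) n (a x y : 'rV[R]_n) : dotv a (x - y) = dotv a x - dotv a y.
Proof. by rewrite dotvDr dotvNr. Qed.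

Lemma dotvC (R : realType) n (a x : 'rV[R]_n) : dotv a x = dotv x a.
Proof. by apply: eq_bigr => i _; rewrite mulrC. Qed.

Lemma dotvZl (R : realType) n (a x : 'rV[R]_n) k : dotv (k *: a) x = k * dotv a x.
Proof. by rewrite dotvC dotvZr dotvC. Qed.

Lemma dotvBl (R : realType) n (a b x : 'rV[R]_n) : dotv (a - b) x = dotv a x - dotv b x.
Proof. by rewrite dotvC dotvBr (@dotvC _ _ x a) (@dotvC _ _ x b). Qed.

Lemma dotv_ge0 (R : realType) n (x : 'rV[R]_n) : 0 <= dotv x x.
Proof. by apply: sumr_ge0 => i _; rewrite -expr2 sqr_ge0. Qed.

Lemma dotv_eq0 (R : realType) n (x : 'rV[R]_n) : dotv x x = 0 -> x = 0.
Proof.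
move=> h; apply/matrixP => i j; rewrite mxE (ord1 i).
have /eqP := psumr_eq0P (fun i _ => (ltac:(by rewrite -expr2 sqr_ge0) : 0 <= x ord0 i * x ord0 i)) h (isT : true) (i := j).
by rewrite mulf_eq0 orbb => /eqP.
Qed.

Lemma dotv_cont (R : realType) n (a : 'rV[R]_n) : continuous (fun x => dotv a x).
Proof.
have -> : (fun x => dotv a x) = \sum_(i < n) (fun x : 'rV[R]_n => a ord0 i * x ord0 i).
  by apply/funext => x; rewrite fct_sumE.
pose P := fun f : 'rV[R]_n -> R => continuous f.
suff : P (\sum_(i < n) (fun x : 'rV[R]_n => a ord0 i * x ord0 i)) by [].
apply: big_ind; rewrite /P.
- move=> x; exact: cst_continuous.
- move=> f g cf cg x; exact: (cvgD (cf x) (cg x)).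
- move=> i _ x; exact: (cvgM (cvg_cst (a ord0 i)) (@coord_continuous R 1 n ord0 i x)).
Qed.

Lemma real_tlemma (R : realType) (A Q : R) : 0 <= Q ->
  (forall t, 0 < t -> t <= 1 -> 0 <= - (2 * t * A) + t ^+ 2 * Q) -> A <= 0.
Proof.
move=> Q0 H; rewrite leNgt; apply/negP => A0.
have [hQ|hQ] := lerP Q A.
  have := H 1 ltr01 (lexx _); rewrite expr1n mul1r mulr1; lra.
have Qp : 0 < Q by apply: lt_trans hQ.
set t := A / Q.
have tQ : t * Q = A by rewrite /t mulfVK // gt_eqF.
have t0 : 0 < t by rewrite /t divr_gt0.
have t1 : t <= 1 by rewrite /t ler_pdivrMr // mul1r ltW.
have := H t t0 t1.
have -> : t ^+ 2 * Q = t * A by rewrite expr2 -mulrA tQ.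
nra.
Qed.

Definition mpos {R : realType} (u : R) := (u + `|u|) / 2.

Lemma mpos_ge0 {R : realType} (u : R) : 0 <= mpos u.
Proof. rewrite /mpos; have [h|h] := lerP 0 u; [rewrite ger0_norm//|rewrite ltr0_norm//]; lra. Qed.

Lemma mpos_ge {R : realType} (u : R) : u <= mpos u.
Proof. rewrite /mpos; have [h|h] := lerP 0 u; [rewrite ger0_norm//|rewrite ltr0_norm//]; lra. Qed.

Lemma mpos_pos {R : realType} (u : R) : 0 <= u -> mpos u = u.
Proof. by move=> h; rewrite /mpos ger0_norm//; field. Qed.

Lemma mpos_sq {R : realType} (u v : R) : u <= v -> mpos u ^+ 2 <= v ^+ 2.
Proof.
rewrite /mpos; have [h|h] := lerP 0 u; [rewrite ger0_norm//|rewrite ltr0_norm//] => uv.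
  have -> : (u + u) / 2 = u by field.
  by rewrite ler_sqr // ?nnegrE //; apply: le_trans uv.
have -> : (u + - u) / 2 = 0 by field.
by rewrite expr0n /= sqr_ge0.
Qed.

Lemma dist2_cont (R : realType) n (x0 : 'rV[R]_n) :
  continuous (fun y : 'rV[R]_n => dotv (x0 - y) (x0 - y)).
Proof.
have -> : (fun y : 'rV[R]_n => dotv (x0 - y) (x0 - y)) =
   \sum_(i < n) (fun y : 'rV[R]_n => (x0 ord0 i - y ord0 i) * (x0 ord0 i - y ord0 i)).
  by apply/funext => x; rewrite fct_sumE; apply: eq_bigr => i _; rewrite !mxE.
pose P := fun f : 'rV[R]_n -> R => continuous f.
suff : P (\sum_(i < n) (fun y : 'rV[R]_n => (x0 ord0 i - y ord0 i) * (x0 ord0 i - y ord0 i))) by [].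
apply: big_ind; rewrite /P.
- move=> x; exact: cst_continuous.
- move=> f g cf cg x; exact: (cvgD (cf x) (cg x)).
- move=> i _ x.
  exact: (cvgM (cvgB (cvg_cst (x0 ord0 i)) (@coord_continuous R 1 n ord0 i x))
                (cvgB (cvg_cst (x0 ord0 i)) (@coord_continuous R 1 n ord0 i x))).
Qed.

Lemma G_cont (R : realType) n (C : set 'rV[R]_n) (phi : 'rV[R]_n -> R) x0 c :
  {within C, continuous phi} ->
  {within C, continuous (fun y : 'rV[R]_n => dotv (x0 - y) (x0 - y) + mpos (phi y - c) ^+ 2)}.
Proof.
move=> cf t.
have h1 : (fun y : 'rV[R]_n => dotv (x0 - y) (x0 - y)) @ (nbhs t) --> dotv (x0 - t) (x0 - t).
  exact: (continuous_subspaceT (A := C) (@dist2_cont R n x0)).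
have h2 : (fun y => phi y - c) @ (nbhs t) --> (phi t - c).
  exact: (cvgB (cf t) (cvg_cst c)).
have h3 : (fun y => phi y - c + `|phi y - c|) @ (nbhs t) --> (phi t - c + `|phi t - c|).
  exact: (cvgD h2 (cvg_norm h2)).
have h4 : (fun y => mpos (phi y - c)) @ (nbhs t) --> mpos (phi t - c).
  exact: (cvgM h3 (cvg_cst (2^-1 : R))).
have h5 : (fun y => mpos (phi y - c) ^+ 2) @ (nbhs t) --> mpos (phi t - c) ^+ 2.
  exact: (cvgM h4 h4).
exact: (cvgD h1 h5).
Qed.

Lemma dotv_expand (R : realType) n (w e : 'rV[R]_n) (t : R) :
  dotv (w - t *: e) (w - t *: e) = dotv w w - 2 * t * dotv w e + t ^+ 2 * dotv e e.
Proof.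
rewrite !dotvBr !dotvBl !dotvZr !dotvZl (@dotvC _ _ e w); ring.
Qed.

Lemma sep (R : realType) n (C : set 'rV[R]_n) (phi : 'rV[R]_n -> R) x0 eps :
  compact C -> convex_set_Rn C -> {within C, continuous phi} -> convex_on C phi ->
  C x0 -> 0 < eps ->
  exists (a : 'rV[R]_n) (b : R), (forall y, C y -> dotv a y + b <= phi y) /\
     phi x0 - eps < dotv a x0 + b.
Proof.
move=> cC cvC cf cvf Cx0 e0.
set c := phi x0 - eps.
have cG := @G_cont R n C phi x0 c cf.
have [py] := EVT_min_rV (ex_intro _ x0 Cx0) cC cG.
rewrite inE => pyC pymin.
set w := x0 - py; set d := mpos (phi py - c); set sp := c + d.
have d0 : 0 <= d by apply: mpos_ge0.
have key : forall y, C y -> dotv w (y - py) <= d * (phi y - sp).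
  move=> y yC; rewrite -subr_le0.
  have : dotv w (y - py) - d * (phi y - sp) <= 0; last by [].
  apply: (@real_tlemma R _ (dotv (y - py) (y - py) + (phi y - sp) ^+ 2)).
    by rewrite addr_ge0 ?dotv_ge0 ?sqr_ge0.
  move=> t t0 t1.
  set yt := t *: y + (1 - t) *: py.
  have ytC : C yt by apply: cvC => //; rewrite (ltW t0) t1.
  have hphi := cvf y py yC pyC t (ltac:(by rewrite (ltW t0) t1)).
  have := pymin yt (ltac:(by rewrite inE)).
  have -> : x0 - yt = w - t *: (y - py).
    by apply/matrixP => i j; rewrite /yt /w !mxE; ring.
  rewrite dotv_expand -/w.
  have hm : mpos (phi yt - c) ^+ 2 <= (d + t * (phi y - sp)) ^+ 2.
    apply: mpos_sq.
    have : phi py <= sp by rewrite /sp /d; have := mpos_ge (phi py - c); lra.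
    move=> hp.
    have : (1 - t) * phi py <= (1 - t) * sp by apply: ler_wpM2l => //; lra.
    rewrite /sp; lra.
  move=> hmin; rewrite (_ : mpos (phi py - c) = d) in hmin; last by [].
  have : dotv w w + d ^+ 2 <= dotv w w - 2 * t * dotv w (y - py) + t ^+ 2 * dotv (y - py) (y - py)
          + (d + t * (phi y - sp)) ^+ 2 by lra.
  move=> h; nra.
have dpos : 0 < d.
  rewrite lt_neqAle d0 andbT; apply/negP => /eqP d00.
  have := key x0 Cx0; rewrite -d00 mul0r -/w => hw.
  have w0 : w = 0 by apply: dotv_eq0; apply/eqP; rewrite eq_le hw dotv_ge0.
  have epy : py = x0 by apply/eqP; rewrite eq_sym -subr_eq0 -/w w0.
  move: d00; rewrite /d epy /c mpos_pos; last by lra.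
  move=> h; lra.
exists (d^-1 *: w), (sp - dotv (d^-1 *: w) py); split.
  move=> y yC.
  have -> : dotv (d^-1 *: w) y + (sp - dotv (d^-1 *: w) py) = sp + d^-1 * dotv w (y - py).
    by rewrite !dotvZl dotvBr; ring.
  have : d^-1 * dotv w (y - py) <= d^-1 * (d * (phi y - sp)).
    by apply: ler_wpM2l; [rewrite invr_ge0|apply: key].
  rewrite mulKf ?gt_eqF //; lra.
have -> : dotv (d^-1 *: w) x0 + (sp - dotv (d^-1 *: w) py) = sp + d^-1 * dotv w w.
  by rewrite !dotvZl /w dotvBr; ring.
have : 0 <= d^-1 * dotv w w by rewrite mulr_ge0 ?invr_ge0 ?dotv_ge0.
rewrite /sp -/c; lra.
Qed.

Lemma compact_coord_bound (R : realType) n (C : set 'rV[R]_n) : compact C ->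
  exists2 M : R, 0 < M & forall x, C x -> forall i, `|x ord0 i| <= M.
Proof.
move=> /compact_bounded /ex_strict_bound_gt0 [M M0 hM]; exists M => // x Cx i.
have := hM x Cx => /= /ltW; apply: le_trans.
have -> : `|x| = mx_norm x by [].
rewrite mx_normrE.
exact: (le_bigmax _ (fun ij : 'I_1 * 'I_n => `|x ij.1 ij.2|) (ord0, i)).
Qed.

Lemma rat_approx (R : realType) (x eta : R) : 0 < eta ->
  exists q : rat, `|x - ratr q| < eta.
Proof.
move=> e0.
have [z [bz [q _ qz]]] := dense_rat (ex_intro _ x (ballxx x e0)) (ball_open x eta).
by exists q; rewrite qz; move: bz; rewrite /ball /=.
Qed.

Lemma vec_approx (R : realType) n (a : 'rV[R]_n) (eta : R) : 0 < eta ->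
  exists q : 'rV[rat]_n, forall i, `|a ord0 i - ratr (q ord0 i)| < eta.
Proof.
move=> e0.
have [f hf] := choice (fun i : 'I_n => @rat_approx R (a ord0 i) eta e0).
by exists (\row_i f i) => i; rewrite mxE.
Qed.

Lemma dot_err (R : realType) n (a : 'rV[R]_n) (q : 'rV[rat]_n) (y : 'rV[R]_n) (eta M : R) :
  (forall i, `|a ord0 i - ratr (q ord0 i)| < eta) -> (forall i, `|y ord0 i| <= M) ->
  `|dotv a y - dotv (map_mx ratr q) y| <= n%:R * (eta * M).
Proof.
move=> ha hy.
rewrite /dotv -sumrB.
apply: (le_trans (ler_norm_sum _ _ _)).
have -> : n%:R * (eta * M) = \sum_(i < n) (eta * M).
  by rewrite sumr_const card_ord mulr_natl.
apply: ler_sum => i _; rewrite mxE -mulrBl normrM.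
apply: ler_pM => //; first exact: ltW.
Qed.

Lemma local (R : realType) n (C : set 'rV[R]_n) (phi : 'rV[R]_n -> R) (eps M : R) x0 :
  compact C -> convex_set_Rn C -> {within C, continuous phi} -> convex_on C phi ->
  0 < M -> (forall x, C x -> forall i, `|x ord0 i| <= M) -> C x0 -> 0 < eps ->
  exists (aq : 'rV[rat]_n) (bq : rat) (r : R), 0 < r /\
   (forall y, C y -> dotv (map_mx ratr aq) y + ratr bq <= phi y + eps / 8) /\
   (forall y, C y -> ball x0 r y -> phi y - 5 * eps / 8 < dotv (map_mx ratr aq) y + ratr bq).
Proof.
move=> cC cvC cf cvf M0 hM Cx0 e0.
have e4 : 0 < eps / 4 by rewrite divr_gt0.
have [a [b [hle hgt]]] := @sep R n C phi x0 (eps / 4) cC cvC cf cvf Cx0 e4.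
have k0 : 0 <= n%:R * M by rewrite mulr_ge0 // ltW.
set eta := eps / (16 * (n%:R * M + 1)).
have eta0 : 0 < eta by rewrite /eta divr_gt0 // mulr_gt0 //; lra.
have [aq haq] := @vec_approx R n a eta eta0.
have e16 : 0 < eps / 16 by rewrite divr_gt0.
have [bq hbq] := @rat_approx R b _ e16.
pose Lq := fun y : 'rV[R]_n => dotv (map_mx (ratr : rat -> R) aq) y + ratr bq.
have err : forall y, C y -> `|(dotv a y + b) - Lq y| < eps / 8.
  move=> y Cy.
  have h1 := @dot_err R n a aq y eta M haq (hM y Cy).
  have h2 : n%:R * (eta * M) <= eps / 16.
    have -> : n%:R * (eta * M) = (eps / 16) * ((n%:R * M) / (n%:R * M + 1)).
      rewrite /eta; field; rewrite gt_eqF //; lra.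
    rewrite -[leRHS]mulr1 ler_wpM2l //; first lra.
    by rewrite ler_pdivrMr ?mul1r; lra.
  have -> : dotv a y + b - Lq y = (dotv a y - dotv (map_mx ratr aq) y) + (b - ratr bq).
    by rewrite /Lq; ring.
  apply: (le_lt_trans (ler_normD _ _)); lra.
have hc : {within C, continuous Lq}.
  apply: continuous_subspaceT => y.
  exact: (cvgD (@dotv_cont R n (map_mx ratr aq) y) (cvg_cst _)).
have hh : (fun y => Lq y - phi y) @ nbhs (x0 : subspace C) --> Lq x0 - phi x0.
  exact: (cvgB (hc x0) (cf x0)).
move: hh => /cvgrPdist_lt /(_ _ e4) hnear.
have : within C (nbhs x0) (fun y => `|Lq x0 - phi x0 - (Lq y - phi y)| < eps / 4).
  rewrite (nbhs_subspace_in Cx0); exact: hnear.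
move=> /nbhs_ballP [r r0 hr].
exists aq, bq, r; split => //; split.
  move=> y Cy; have := err y Cy; rewrite ltr_norml => /andP [h1 h2].
  have := hle y Cy; rewrite /Lq in h1 h2 *; lra.
move=> y Cy byr.
have := hr y byr Cy; rewrite ltr_norml => /andP [h1 h2].
have := err x0 Cx0; rewrite ltr_norml => /andP [h3 h4].
rewrite /Lq /= in h1 h2 h3 h4 *; lra.
Qed.

Lemma lse_bounds (R : realType) K (T : R) (L : 'I_K -> R) (j : 'I_K) (U : R) :
  0 < T -> (forall k, L k <= U) ->
  L j <= T * ln (\sum_(k < K) expR (L k / T)) /\
  T * ln (\sum_(k < K) expR (L k / T)) <= U + T * ln K%:R.
Proof.
move=> T0 hU.
have Sj : expR (L j / T) <= \sum_(k < K) expR (L k / T).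
  rewrite (bigD1 j) //= lerDl; apply: sumr_ge0 => k _; exact: ltW (expR_gt0 _).
have S0 : 0 < \sum_(k < K) expR (L k / T) by apply: lt_le_trans Sj; exact: expR_gt0.
have K0 : (0 < K)%N by move: (ltn_ord j); exact: leq_ltn_trans.
split.
  have : ln (expR (L j / T)) <= ln (\sum_(k < K) expR (L k / T)).
    by rewrite ler_ln ?posrE ?expR_gt0.
  rewrite expRK => h.
  have := ler_wpM2l (ltW T0) h; rewrite mulrCA divff ?gt_eqF // mulr1.
  by [].
have SU : \sum_(k < K) expR (L k / T) <= K%:R * expR (U / T).
  have -> : K%:R * expR (U / T) = \sum_(k < K) expR (U / T).
    by rewrite sumr_const card_ord mulr_natl.
  apply: ler_sum => k _; rewrite ler_expR; apply: ler_wpM2r => //.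
  by rewrite invr_ge0 ltW.
have Kp : 0 < (K%:R : R) by rewrite ltr0n.
have : ln (\sum_(k < K) expR (L k / T)) <= ln (K%:R * expR (U / T)).
  by rewrite ler_ln ?posrE ?mulr_gt0 ?expR_gt0.
rewrite lnM ?posrE ?expR_gt0 // expRK => h.
have := ler_wpM2l (ltW T0) h; rewrite mulrDr mulrCA divff ?gt_eqF // mulr1.
by rewrite addrC.
Qed.

Theorem corollary1 (R : realType) (n : nat) (C : set 'rV[R]_n)
  (phi : 'rV[R]_n -> R) :
  compact C -> convex_set_Rn C ->
  {within C, continuous phi} -> convex_on C phi ->
  forall eps : R, 0 < eps ->
  (exists (T : rat) (K : nat) (alpha : 'I_K -> 'rV[rat]_n) (beta : 'I_K -> rat),
      0 < T /\ (0 < K)%N /\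
      forall x, C x -> `| @LSE_rat R n K T alpha beta x - phi x | <= eps) /\
  (exists (p : nat) (K : nat) (alpha : 'I_K -> 'rV[rat]_n) (beta : 'I_K -> rat),
      (0 < p)%N /\ (0 < K)%N /\
      forall x, C x ->
        `| @LSE_rat R n K (p%:R)^-1 alpha beta x - phi x | <= eps).
Proof.
move=> cC cvC cf cvf eps e0.
suff [p [K [alpha [beta [p0 [K0 H]]]]]] : exists (p : nat) (K : nat)
    (alpha : 'I_K -> 'rV[rat]_n) (beta : 'I_K -> rat),
      (0 < p)%N /\ (0 < K)%N /\
      forall x, C x -> `| @LSE_rat R n K (p%:R)^-1 alpha beta x - phi x | <= eps.
  split; last by exists p, K, alpha, beta.
  exists (p%:R^-1), K, alpha, beta; split; first by rewrite invr_gt0 ltr0n.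
  by split.
have [[x1 Cx1]|NC] := pselect (exists x, C x); last first.
  exists 1%N, 1%N, (fun _ => 0), (fun _ => 0); split => //; split => // x Cx.
  by exfalso; apply: NC; exists x.
have [M M0 hM] := @compact_coord_bound R n C cC.
have hloc : forall x0 : 'rV[R]_n, exists t : 'rV[rat]_n * rat * R, C x0 ->
   0 < t.2 /\
   (forall y, C y -> dotv (map_mx ratr t.1.1) y + ratr t.1.2 <= phi y + eps / 8) /\
   (forall y, C y -> ball x0 t.2 y -> phi y - 5 * eps / 8 < dotv (map_mx ratr t.1.1) y + ratr t.1.2).
  move=> x0; have [Cx0|nC] := pselect (C x0).
    have [aq [bq [r hr]]] := @local R n C phi eps M x0 cC cvC cf cvf M0 hM Cx0 e0.
    by exists (aq, bq, r).
  by exists (0, 0, 1).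
have [g hg] := choice hloc.
move: (cC); rewrite compact_cover => cov.
have covC : C `<=` cover C (fun x0 => ball x0 (g x0).2).
  by move=> x Cx; exists x => //; apply: ballxx; exact: (hg x Cx).1.
have [D' sD' hD'] := cov _ C (fun x0 => ball x0 (g x0).2)
  (fun i _ => ball_open _ _) covC.
set s := finmap.enum_fset D'.
have memC : forall k : 'I_(size s), C (nth 0 s k).
  move=> k; have h : nth 0 s k \in s := mem_nth 0 (ltn_ord k).
  exact: (set_mem (sD' _ h)).
have [i1 Di1 _] := hD' x1 Cx1.
have K0 : (0 < size s)%N.
  have : (index i1 s < size s)%N by rewrite index_mem.
  exact: leq_ltn_trans.
exists (Num.truncn (2 * ln (size s)%:R / eps)).+1, (size s),
  (fun k => (g (nth 0 s k)).1.1), (fun k => (g (nth 0 s k)).1.2).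
split => //; split => // x Cx.
have [i Di bi] := hD' x Cx.
have iin : (index i s < size s)%N by rewrite index_mem.
set j := Ordinal iin.
have nj : nth 0 s j = i by rewrite /= nth_index.
rewrite /LSE_rat /LSE.
set P := (Num.truncn (2 * ln (size s)%:R / eps)).+1.
have hP : 2 * ln (size s)%:R / eps < P%:R by exact: truncnS_gt.
have P0 : 0 < (P%:R : R) by rewrite ltr0n.
have -> : ratr (P%:R^-1 : rat) = (P%:R^-1 : R) by rewrite fmorphV rmorph_nat.
set Tm := (P%:R^-1 : R).
have T0 : 0 < Tm by rewrite invr_gt0.
pose L := fun k : 'I_(size s) => dotv (map_mx (ratr : rat -> R) (g (nth 0 s k)).1.1) x + ratr (g (nth 0 s k)).1.2.
rewrite (eq_bigr (fun k => expR (L k / Tm))); last by move=> k _; rewrite /L mulrDl.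
have [lo up] := @lse_bounds R (size s) Tm L j (phi x + eps / 8) T0
   (fun k => (hg _ (memC k)).2.1 x Cx).
have hj : phi x - 5 * eps / 8 < L j.
  by rewrite /L nj; exact: ((hg _ (set_mem (sD' _ Di))).2.2 x Cx bi).
have hT : Tm * ln (size s)%:R <= eps / 2.
  have lnK : 0 <= ln ((size s)%:R : R) by rewrite ln_ge0 // ler1n.
  rewrite /Tm mulrC ler_pdivrMr //.
  move: hP; rewrite ltr_pdivrMr // => hP; nra.
rewrite ler_norml; apply/andP; split; lra.
Qed.
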